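(* For $n \geq 4$, the collapsibility number of $\mathcal{VR}(\mathbb{I}_n;3)$ is $8$.
   Context: For $n\ge 1$, $\mathbb{I}_n$ is the $n$-dimensional hypercube graph: vertex set $\{0,1\}^n$, two vertices adjacent iff they differ in exactly one coordinate; it is a metric space with the shortest-path (Hamming) distance $d(v,w)=\#\{i: v(i)\ne w(i)\}$. For a metric space $(X,d)$ and $r\ge0$, $\mathcal{VR}(X;r)$ is the simplicial complex on vertex set $X$ whose simplices are the finite subsets of diameter at most $r$. For a finite simplicial complex $\Delta$: if $\gamma\in\Delta$ with $|\gamma|\le d$ is contained in a unique maximal simplex $\sigma$ of $\Delta$, the elementary $d$-collapse removes all simplices $\tau$ with $\gamma\subseteq\tau\subseteq\sigma$. $\Delta$ is $d$-collapsible if a sequence of elementary $d$-collapses reduces $\Delta$ to the void complex $\emptyset$. The collapsibility number of $\Delta$ is the minimal $d$ such that $\Delta$ is $d$-collapsible. *)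

(* Defs.v *)
From mathcomp Require Import all_boot.
From Stdlib Require Import Relations.Relation_Operators.
Set Implicit Arguments. Unset Strict Implicit. Unset Printing Implicit Defensive.

Definition cube (n : nat) := {ffun 'I_n -> bool}.

(* Hamming (= shortest-path) distance on I_n. *)
Definition hamming (n : nat) (v w : cube n) : nat := #|[set i | v i != w i]|.

(* A finite simplicial complex on a finite vertex type T is represented by its
   set of faces (including the empty face when nonempty). *)
Definition complex (T : finType) := {set {set T}}.

Definition VR (T : finType) (d : T -> T -> nat) (r : nat) : complex T :=
  [set A : {set T} | [forall x in A, forall y in A, d x y <= r]].

Definition VR_cube (n r : nat) : complex (cube n) := VR (@hamming n) r.

Definition maximal_face (T : finType) (K : complex T) (s : {set T}) : Prop :=
  s \in K /\ forall t, t \in K -> s \subset t -> t = s.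

Definition elem_collapse (T : finType) (d : nat) (K K' : complex T) : Prop :=
  exists (g s : {set T}),
    [/\ g \in K, #|g| <= d,
        maximal_face K s /\ g \subset s,
        (forall s', maximal_face K s' -> g \subset s' -> s' = s) &
        K' = K :\: [set t : {set T} | (g \subset t) && (t \subset s)]].

Definition d_collapsible (T : finType) (d : nat) (K : complex T) : Prop :=
  clos_refl_trans _ (@elem_collapse T d) K set0.

Definition is_collapsibility_number (T : finType) (K : complex T) (c : nat) : Prop :=
  d_collapsible c K /\ forall d, d_collapsible d K -> c <= d.

(* Main.v *)
Require Import Defs.
From mathcomp Require Import all_boot.
From Stdlib Require Import Relations.Relation_Operators Relations.Operators_Properties Lia.
From mathcomp Require Import zify.
Set Implicit Arguments. Unset Strict Implicit. Unset Printing Implicit Defensive.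

Section Gen.
Variable T : finType.

Definition jn (v : T) (del L : complex T) : complex T :=
  [set t : {set T} | if v \in t then t :\ v \in L else t \in del].

Lemma elem_sub d (L L' : complex T) : elem_collapse d L L' -> L' \subset L.
Proof. by case=> g [s] [_ _ _ _ ->]; apply: subsetDl. Qed.

Lemma setD1U1 (v : T) (t : {set T}) : v \notin t -> (v |: t) :\ v = t.
Proof.
move=> vt; apply/setP => x; rewrite !inE; case: (x =P v) => [->|//].
by rewrite (negbTE vt).
Qed.

Lemma setU1D1 (v : T) (t : {set T}) : v \in t -> v |: (t :\ v) = t.
Proof. by move=> vt; rewrite setD1K. Qed.

Lemma subD1E (v : T) (g t : {set T}) : v \notin g -> (g \subset t :\ v) = (g \subset t).
Proof.
move=> vg; apply/idP/idP => h; first by apply: subset_trans h (subsetDl _ _).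
apply/subsetP => x xg; rewrite !inE (subsetP h x xg) andbT.
by apply/eqP => e; rewrite -e xg in vg.
Qed.

Lemma D1subE (v : T) (t s : {set T}) : (t :\ v \subset s) = (t \subset v |: s).
Proof. by rewrite subDset. Qed.

Lemma subU1E (v : T) (t s : {set T}) : v \notin t -> (t \subset v |: s) = (t \subset s).
Proof.
move=> vt; apply/idP/idP => h; last exact: subset_trans h (subsetUr _ _).
apply/subsetP => x xt; move: (subsetP h x xt); rewrite !inE; case/orP => // /eqP e.
by rewrite -e xt in vt.
Qed.

Lemma lift_vertex d v (del L L' : complex T) :
  (forall t : {set T}, t \in L -> v \notin t) -> elem_collapse d L L' ->
  elem_collapse d.+1 (jn v del L) (jn v del L').
Proof.
move=> hL [g [s [gL cg [[sL smax] gs] suniq eL']]].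
have vg := hL _ gL; have vs := hL _ sL.
exists (v |: g), (v |: s); split.
- by rewrite inE setU11 setD1U1.
- by rewrite cardsU1 vg.
- split; last by apply: setUS.
  split; first by rewrite inE setU11 setD1U1.
  move=> t; rewrite inE => + sub.
  have vt : v \in t by apply: (subsetP sub); rewrite setU11.
  rewrite vt => tL.
  have st : s \subset t :\ v by rewrite subD1E //; apply: subset_trans sub; apply: subsetUr.
  by rewrite -(smax _ tL st) setU1D1.
- move=> s'' [s''K s''max] gs''.
  have vs'' : v \in s'' by apply: (subsetP gs''); rewrite setU11.
  move: s''K; rewrite inE vs'' => t0L.
  have t0max : maximal_face L (s'' :\ v).
    split=> // t1 t1L sub.
    have vt1 := hL _ t1L.
    have : v |: t1 \in jn v del L by rewrite inE setU11 setD1U1.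
    move=> /s''max; rewrite -{1}(setU1D1 vs'') => /(_ (setUS _ sub)) e.
    by rewrite -(setD1U1 vt1) e.
  have gt0 : g \subset s'' :\ v.
    by rewrite subD1E //; apply: subset_trans gs''; apply: subsetUr.
  by rewrite -(setU1D1 vs'') (suniq _ t0max gt0).
- apply/setP => t; rewrite !inE eL' !inE.
  case vt: (v \in t); last by rewrite subUset sub1set vt.
  by rewrite subD1E // D1subE subUset sub1set vt.
Qed.

Lemma lift_cone d v (L L' : complex T) :
  (forall t : {set T}, t \in L -> v \notin t) -> elem_collapse d L L' ->
  elem_collapse d (jn v L L) (jn v L' L').
Proof.
move=> hL [g [s [gL cg [[sL smax] gs] suniq eL']]].
have vg := hL _ gL; have vs := hL _ sL.
exists g, (v |: s); split.
- by rewrite inE (negbTE vg).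
- done.
- split; last by apply: subset_trans gs (subsetUr _ _).
  split; first by rewrite inE setU11 setD1U1.
  move=> t; rewrite inE => + sub.
  have vt : v \in t by apply: (subsetP sub); rewrite setU11.
  rewrite vt => tL.
  have st : s \subset t :\ v by rewrite subD1E //; apply: subset_trans sub; apply: subsetUr.
  by rewrite -(smax _ tL st) setU1D1.
- move=> s'' [s''K s''max] gs''.
  case vs'': (v \in s''); last first.
    have s''L : s'' \in L by move: s''K; rewrite inE vs''.
    have : v |: s'' \in jn v L L by rewrite inE setU11 setD1U1 ?vs''.
    by move=> /s''max /(_ (subsetUr _ _)) e; move: vs''; rewrite -e setU11.
  move: s''K; rewrite inE vs'' => t0L.
  have t0max : maximal_face L (s'' :\ v).
    split=> // t1 t1L sub.
    have vt1 := hL _ t1L.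
    have : v |: t1 \in jn v L L by rewrite inE setU11 setD1U1.
    move=> /s''max; rewrite -{1}(setU1D1 vs'') => /(_ (setUS _ sub)) e.
    by rewrite -(setD1U1 vt1) e.
  have gt0 : g \subset s'' :\ v by rewrite subD1E.
  by rewrite -(setU1D1 vs'') (suniq _ t0max gt0).
- apply/setP => t; rewrite !inE eL' !inE.
  case vt: (v \in t).
    by rewrite !subD1E // D1subE.
  by rewrite subU1E // vt.
Qed.

Lemma coll_mono d (K : complex T) : d_collapsible d K -> d_collapsible d.+1 K.
Proof.
rewrite /d_collapsible; elim=> [x y h|x|x y z _ h1 _ h2].
- apply: rt_step; case: h => g [s [g1 g2 g3 g4 g5]]; exists g, s; split=> //.
  by apply: leqW.
- exact: rt_refl.
- exact: rt_trans h1 h2.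
Qed.

Lemma coll_monoN d e (K : complex T) : d <= e -> d_collapsible d K -> d_collapsible e K.
Proof.
move=> /subnK <-; elim: (e - d) => [//|k IH] h; rewrite addSn; exact: coll_mono (IH h).
Qed.

Lemma coll_vertex d v (del L : complex T) :
  (forall t : {set T}, t \in L -> v \notin t) ->
  (forall t : {set T}, t \in del -> v \notin t) ->
  d_collapsible d L -> d_collapsible d.+1 del -> d_collapsible d.+1 (jn v del L).
Proof.
move=> hL hdel cL cdel; have {}cL := clos_rt_rt1n _ _ _ _ cL.
have e0 : jn v del set0 = del.
  apply/setP => t; rewrite inE in_set0.
  case vt: (v \in t) => //; apply/esym/negP => /hdel; by rewrite vt.
rewrite /d_collapsible; apply: rt_trans cdel; rewrite -{2}e0.
elim: cL hL => [x _|x y z sxy _ IH hx].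
- exact: rt_refl.
- apply: rt_trans (IH _); first exact/rt_step/lift_vertex.
  by move=> t ty; apply: hx; apply: (subsetP (elem_sub sxy)).
Qed.

Lemma coll_cone d v (L : complex T) :
  (forall t : {set T}, t \in L -> v \notin t) ->
  d_collapsible d L -> d_collapsible d (jn v L L).
Proof.
move=> hL cL; have {}cL := clos_rt_rt1n _ _ _ _ cL.
have e0 : jn v set0 set0 = set0 :> complex T.
  by apply/setP => t; rewrite inE !in_set0; case: (v \in t).
rewrite /d_collapsible -e0.
elim: cL hL => [x _|x y z sxy _ IH hx].
- exact: rt_refl.
- apply: rt_trans (IH _); first exact/rt_step/lift_cone.
  by move=> t ty; apply: hx; apply: (subsetP (elem_sub sxy)).
Qed.

Lemma coll_point d : d_collapsible d [set set0 : {set T}].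
Proof.
apply: rt_step; exists set0, set0; split.
- by rewrite inE.
- by rewrite cards0.
- split=> //; split; first by rewrite inE.
  by move=> t; rewrite inE => /eqP.
- by move=> s' [s'K _] _; move: s'K; rewrite inE => /eqP.
- apply/setP => t; rewrite !inE sub0set /=.
  case: (t =P set0) => [->|/eqP]; first by rewrite sub0set.
  by rewrite subset0 => /negbTE ->.
Qed.
End Gen.

Section VRgen.
Variable T : finType.
Variable dist : T -> T -> nat.
Hypothesis dsym : forall x y, dist x y = dist y x.
Hypothesis d0 : forall x, dist x x = 0.

Definition VRU (U : {set T}) : complex T :=
  [set A : {set T} | (A \subset U) && [forall x in A, forall y in A, dist x y <= 3]].
Definition Nb (x : T) : {set T} := [set y | (y != x) && (dist x y <= 3)].
Definition Good (X : {set T}) d := forall U : {set T}, U \subset X -> d_collapsible d (VRU U).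

Lemma VRU_avoid (U : {set T}) v (t : {set T}) : v \notin U -> t \in VRU U -> v \notin t.
Proof. move=> vU; rewrite inE => /andP [tU _]; apply: contra vU; exact: (subsetP tU). Qed.

Lemma VRU_split (y : T) (U : {set T}) : y \in U -> VRU U = jn y (VRU (U :\ y)) (VRU (Nb y :&: U)).
Proof.
move=> yU; apply/setP => t; rewrite !inE.
case yt: (y \in t).
- apply/andP/andP => [[tU /forallP ht]|[tU /forallP ht]]; split.
  + apply/subsetP => z; rewrite !inE => /andP [zy zt].
    rewrite (subsetP tU _ zt) zy /= andbT.
    by move: (ht y); rewrite yt => /= /forallP /(_ z); rewrite zt.
  + apply/forallP => a; apply/implyP => /setD1P [_ aT]; apply/forallP => b.
    apply/implyP => /setD1P [_ bt].
    by move: (ht a); rewrite aT => /= /forallP /(_ b); rewrite bt.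
  + apply/subsetP => z zt; case: (z =P y) => [->//|/eqP zy].
    have : z \in t :\ y by rewrite !inE zy.
    by move/(subsetP tU); rewrite !inE => /andP [_ ->].
  + have hy z : z \in t -> dist y z <= 3.
      move=> zt; case: (z =P y) => [->|/eqP zy]; first by rewrite d0.
      have : z \in t :\ y by rewrite !inE zy.
      by move/(subsetP tU); rewrite !inE => /andP [/andP [_ ->] _].
    apply/forallP => a; apply/implyP => aT; apply/forallP => b; apply/implyP => bt.
    case: (a =P y) => [->|/eqP ay]; first exact: hy.
    case: (b =P y) => [->|/eqP b_y]; first by rewrite dsym; exact: hy.
    have aT' : a \in t :\ y by rewrite !inE ay.
    have bt' : b \in t :\ y by rewrite !inE b_y.
    by move: (ht a); rewrite aT' => /= /forallP /(_ b); rewrite bt'.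
- congr (_ && _); apply/idP/idP => h.
  + apply/subsetP => z zt; rewrite !inE (subsetP h _ zt) andbT.
    by apply/eqP => e; rewrite -e zt in yt.
  + by apply: subset_trans h (subsetDl _ _).
Qed.

Lemma VRU0 : VRU set0 = [set set0].
Proof.
apply/setP => t; rewrite !inE subset0; case: (t =P set0) => [->|] //=.
by apply/forallP => x; rewrite in_set0.
Qed.

Lemma Good0 d : Good set0 d.
Proof. move=> U; rewrite subset0 => /eqP ->; rewrite VRU0; exact: coll_point. Qed.

Lemma Good_sub (X Y : {set T}) d : X \subset Y -> Good Y d -> Good X d.
Proof. by move=> XY hY U UX; apply: hY; apply: subset_trans UX XY. Qed.

Lemma Good_monoN (X : {set T}) d e : d <= e -> Good X d -> Good X e.
Proof. by move=> de h U UX; apply: coll_monoN de (h U UX). Qed.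

Lemma Good_cone (X C : {set T}) d :
  (forall c z, c \in C -> c \in X -> z \in X -> z != c -> dist c z <= 3) ->
  Good (X :\: C) d -> Good X d.
Proof.
move=> hc hg U; move: {2}#|U :&: C| (leqnn #|U :&: C|) => k.
elim: k U => [|k IH] U hk UX.
- apply: hg; apply/subsetP => z zU; rewrite inE (subsetP UX _ zU) andbT.
  apply/negP => zC; move: hk; rewrite leqn0 cards_eq0 => /eqP/setP/(_ z).
  by rewrite !inE zU zC.
- case: (set_0Vmem (U :&: C)) => [e0|[c]].
    by apply: IH; [rewrite e0 cards0|].
  rewrite inE => /andP [cU cC].
  have e : Nb c :&: U = U :\ c.
    apply/setP => z; rewrite !inE; case: (z =P c) => [->|/eqP zc] /=; first by rewrite ?eqxx.
    case zU: (z \in U); rewrite ?andbF ?andbT //=.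
    by rewrite ?zc (hc c z cC (subsetP UX _ cU) (subsetP UX _ zU) zc).
  rewrite (VRU_split cU) e; apply: coll_cone.
    by move=> t; apply: VRU_avoid; rewrite !inE eqxx.
  apply: IH; last by apply: subset_trans UX; apply: subsetDl.
  have : #|(U :\ c) :&: C| < #|U :&: C|.
    apply: proper_card; rewrite properE; apply/andP; split.
      by apply: setSI; apply: subsetDl.
    by apply/subsetPn; exists c; rewrite !inE ?eqxx ?cU ?cC.
  by move=> h; rewrite -ltnS; apply: leq_trans h hk.
Qed.

Lemma Good_elim (X Y : {set T}) d :
  Good (X :\: Y) d.+1 -> (forall y, y \in X -> y \in Y -> Good (Nb y :&: X) d) ->
  Good X d.+1.
Proof.
move=> hg hy U; move: {2}#|U :&: Y| (leqnn #|U :&: Y|) => k.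
elim: k U => [|k IH] U hk UX.
- apply: hg; apply/subsetP => z zU; rewrite inE (subsetP UX _ zU) andbT.
  apply/negP => zC; move: hk; rewrite leqn0 cards_eq0 => /eqP/setP/(_ z).
  by rewrite !inE zU zC.
- case: (set_0Vmem (U :&: Y)) => [e0|[c]].
    by apply: IH; [rewrite e0 cards0|].
  rewrite inE => /andP [cU cC].
  rewrite (VRU_split cU); apply: coll_vertex.
  + by move=> t; apply: VRU_avoid; rewrite !inE eqxx.
  + by move=> t; apply: VRU_avoid; rewrite !inE eqxx.
  + apply: (hy c (subsetP UX _ cU) cC); exact: setIS.
  apply: IH; last by apply: subset_trans UX; apply: subsetDl.
  have : #|(U :\ c) :&: Y| < #|U :&: Y|.
    apply: proper_card; rewrite properE; apply/andP; split.
      by apply: setSI; apply: subsetDl.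
    by apply/subsetPn; exists c; rewrite !inE ?eqxx ?cU ?cC.
  by move=> h; rewrite -ltnS; apply: leq_trans h hk.
Qed.

Lemma Good_local (X : {set T}) d : (forall y, y \in X -> Good (Nb y :&: X) d) -> Good X d.+1.
Proof.
move=> h; apply: (Good_elim (Y := X)); last by move=> y yX _; apply: h.
by rewrite setDv; apply: Good0.
Qed.

Lemma Good_clique (X : {set T}) d : (forall x y, x \in X -> y \in X -> y != x -> dist x y <= 3) -> Good X d.
Proof.
move=> h; apply: (Good_cone (C := X)); first by move=> c z _; apply: h.
by rewrite setDv; apply: Good0.
Qed.
End VRgen.

Section Venn.
Variables (I : finType) (A1 A2 A3 A4 A5 : {set I}).
Definition rg b1 b2 b3 b4 b5 := #|[set i | [&& (i \in A1) == b1, (i \in A2) == b2,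
   (i \in A3) == b3, (i \in A4) == b4 & (i \in A5) == b5]]|.

Lemma card_sumb (S : {set I}) : #|S| = \sum_i (i \in S : nat).
Proof. by rewrite -sum1_card big_mkcond /=; apply: eq_bigr => i _; case: (i \in S). Qed.

Lemma vennE (X : {set I}) (f : bool -> bool -> bool -> bool -> bool -> bool) :
  (forall i, (i \in X) = f (i \in A1) (i \in A2) (i \in A3) (i \in A4) (i \in A5)) ->
  #|X| = \sum_(b1 : bool) \sum_(b2 : bool) \sum_(b3 : bool) \sum_(b4 : bool) \sum_(b5 : bool)
     f b1 b2 b3 b4 b5 * rg b1 b2 b3 b4 b5.
Proof.
move=> hX; rewrite !big_bool /rg !card_sumb !big_distrr -!big_split /=.
apply: eq_bigr => i _; rewrite !inE hX.
by case: (i \in A1); case: (i \in A2); case: (i \in A3); case: (i \in A4); case: (i \in A5);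
  rewrite /= ?muln0 ?muln1 ?addn0 ?add0n.
Qed.
End Venn.

Ltac vcard A1 A2 A3 A4 A5 X f :=
  let h := fresh "hv" in
  have h := @vennE _ A1 A2 A3 A4 A5 X (f : bool -> bool -> bool -> bool -> bool -> bool) (fun i => ltac:(by rewrite ?inE));
  rewrite !big_bool /= in h.

Lemma fact5 (I : finType) (B C D E F : {set I}) :
  #|B| = 3 -> #|C| = 3 -> #|D| = 3 -> #|E| = 3 -> #|F| = 3 ->
  #|B :&: C| = 2 -> #|B :&: D| = 2 -> #|B :&: E| = 2 -> #|B :&: F| = 2 ->
  #|C :&: D| = 2 -> #|C :&: E| = 2 -> #|C :&: F| = 2 ->
  #|D :&: E| = 2 -> #|D :&: F| = 2 -> #|E :&: F| = 2 ->
  #|B :&: C :&: D| = 2.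
Proof.
move=> *.
vcard B C D E F B (fun b _ _ _ _ : bool => b).
vcard B C D E F C (fun _ b _ _ _ : bool => b).
vcard B C D E F D (fun _ _ b _ _ : bool => b).
vcard B C D E F E (fun _ _ _ b _ : bool => b).
vcard B C D E F F (fun _ _ _ _ b : bool => b).
vcard B C D E F (B :&: C) (fun b c _ _ _ : bool => b && c).
vcard B C D E F (B :&: D) (fun b _ c _ _ : bool => b && c).
vcard B C D E F (B :&: E) (fun b _ _ c _ : bool => b && c).
vcard B C D E F (B :&: F) (fun b _ _ _ c : bool => b && c).
vcard B C D E F (C :&: D) (fun _ b c _ _ : bool => b && c).
vcard B C D E F (C :&: E) (fun _ b _ c _ : bool => b && c).
vcard B C D E F (C :&: F) (fun _ b _ _ c : bool => b && c).
vcard B C D E F (D :&: E) (fun _ _ b c _ : bool => b && c).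
vcard B C D E F (D :&: F) (fun _ _ b _ c : bool => b && c).
vcard B C D E F (E :&: F) (fun _ _ _ b c : bool => b && c).
vcard B C D E F (B :&: C :&: D) (fun b c d _ _ : bool => b && c && d).
lia.
Qed.

Lemma fcone (I : finType) (B C D F Y : {set I}) :
  #|B| = 3 -> #|C| = 3 -> #|D| = 3 -> #|F| = 3 ->
  #|B :&: C| = 2 -> #|B :&: D| = 2 -> #|B :&: F| = 2 ->
  #|C :&: D| = 2 -> #|C :&: F| = 2 -> #|D :&: F| = 2 ->
  #|B :&: C :&: D| = 2 -> #|B :&: C :&: F| = 2 ->
  1 <= #|Y| -> #|Y| <= 3 ->
  #|Y| <= 2 * #|B :&: Y| -> #|Y| <= 2 * #|C :&: Y| -> #|Y| <= 2 * #|D :&: Y| ->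
  #|Y| <= 2 * #|F :&: Y|.
Proof.
move=> *.
vcard B C D F Y B (fun b _ _ _ _ : bool => b).
vcard B C D F Y C (fun _ b _ _ _ : bool => b).
vcard B C D F Y D (fun _ _ b _ _ : bool => b).
vcard B C D F Y F (fun _ _ _ b _ : bool => b).
vcard B C D F Y Y (fun _ _ _ _ b : bool => b).
vcard B C D F Y (B :&: C) (fun b c _ _ _ : bool => b && c).
vcard B C D F Y (B :&: D) (fun b _ c _ _ : bool => b && c).
vcard B C D F Y (B :&: F) (fun b _ _ c _ : bool => b && c).
vcard B C D F Y (B :&: Y) (fun b _ _ _ c : bool => b && c).
vcard B C D F Y (C :&: D) (fun _ b c _ _ : bool => b && c).
vcard B C D F Y (C :&: F) (fun _ b _ c _ : bool => b && c).
vcard B C D F Y (C :&: Y) (fun _ b _ _ c : bool => b && c).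
vcard B C D F Y (D :&: F) (fun _ _ b c _ : bool => b && c).
vcard B C D F Y (D :&: Y) (fun _ _ b _ c : bool => b && c).
vcard B C D F Y (F :&: Y) (fun _ _ _ b c : bool => b && c).
vcard B C D F Y (B :&: C :&: D) (fun b c d _ _ : bool => b && c && d).
vcard B C D F Y (B :&: C :&: F) (fun b c _ d _ : bool => b && c && d).
lia.
Qed.

Lemma fl2 (I : finType) (P Q R R1 R2 : {set I}) :
  #|P| = 2 -> #|Q| = 2 -> #|R| = 2 -> #|R1| = 2 -> #|R2| = 2 ->
  #|P :&: Q| = 1 -> #|P :&: R| = 1 -> #|Q :&: R| = 1 ->
  #|P :&: R1| = 1 -> #|Q :&: R1| = 1 -> #|R :&: R1| = 1 ->
  #|P :&: R2| = 1 -> #|Q :&: R2| = 1 -> #|R :&: R2| = 1 ->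
  #|R1 :&: R2| <= 1 ->
  #|R1 :&: R2| = 1.
Proof.
move=> *.
vcard P Q R R1 R2 P (fun b _ _ _ _ : bool => b).
vcard P Q R R1 R2 Q (fun _ b _ _ _ : bool => b).
vcard P Q R R1 R2 R (fun _ _ b _ _ : bool => b).
vcard P Q R R1 R2 R1 (fun _ _ _ b _ : bool => b).
vcard P Q R R1 R2 R2 (fun _ _ _ _ b : bool => b).
vcard P Q R R1 R2 (P :&: Q) (fun b c _ _ _ : bool => b && c).
vcard P Q R R1 R2 (P :&: R) (fun b _ c _ _ : bool => b && c).
vcard P Q R R1 R2 (P :&: R1) (fun b _ _ c _ : bool => b && c).
vcard P Q R R1 R2 (P :&: R2) (fun b _ _ _ c : bool => b && c).
vcard P Q R R1 R2 (Q :&: R) (fun _ b c _ _ : bool => b && c).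
vcard P Q R R1 R2 (Q :&: R1) (fun _ b _ c _ : bool => b && c).
vcard P Q R R1 R2 (Q :&: R2) (fun _ b _ _ c : bool => b && c).
vcard P Q R R1 R2 (R :&: R1) (fun _ _ b c _ : bool => b && c).
vcard P Q R R1 R2 (R :&: R2) (fun _ _ b _ c : bool => b && c).
vcard P Q R R1 R2 (R1 :&: R2) (fun _ _ _ b c : bool => b && c).
lia.
Qed.

Section Cube.
Variable n : nat.
Local Notation T := (cube n).

Lemma ham_sym (x y : T) : hamming x y = hamming y x.
Proof. by rewrite /hamming; apply: eq_card => i; rewrite !inE eq_sym. Qed.

Lemma ham0 (x : T) : hamming x x = 0.
Proof. by rewrite /hamming; apply/eqP; rewrite cards_eq0; apply/eqP/setP => i; rewrite !inE eqxx. Qed.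

Lemma ham_eq0 (x y : T) : hamming x y = 0 -> x = y.
Proof.
rewrite /hamming => /card0_eq h.
by apply/ffunP => i; move: (h i); rewrite !inE => /negbFE/eqP.
Qed.

Lemma ham_pos (x y : T) : x != y -> 0 < hamming x y.
Proof. by move=> xy; rewrite lt0n; apply/eqP => /ham_eq0 e; rewrite e eqxx in xy. Qed.

Lemma ham_tri (x y z : T) : hamming x z <= hamming x y + hamming y z.
Proof.
rewrite /hamming; apply: leq_trans (leq_card_setU _ _); apply: subset_leq_card.
apply/subsetP => i; rewrite !inE; case: (x i); case: (y i); case: (z i) => //.
Qed.

Definition Dv (v x : T) := [set i | x i != v i].

Lemma hamv (v x : T) : hamming v x = #|Dv v x|.
Proof. by rewrite /hamming; apply: eq_card => i; rewrite !inE eq_sym. Qed.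

Lemma hamxy (v x y : T) : hamming x y + 2 * #|Dv v x :&: Dv v y| = #|Dv v x| + #|Dv v y|.
Proof.
rewrite -cardsUI.
have -> : hamming x y = #|(Dv v x :|: Dv v y) :\: (Dv v x :&: Dv v y)|.
  rewrite /hamming; apply: eq_card => i; rewrite !inE.
  by case: (x i); case: (y i); case: (v i).
rewrite cardsD (setIidPr _); last by apply: subset_trans (subsetIl _ _) (subsetUl _ _).
have : #|Dv v x :&: Dv v y| <= #|Dv v x :|: Dv v y|.
  by apply: subset_leq_card; apply: subset_trans (subsetIl _ _) (subsetUl _ _).
lia.
Qed.
End Cube.

Section Up.
Variable n : nat.
Local Notation T := (cube n).
Local Notation NB := (Nb (@hamming n)).
Local Notation GD := (Good (@hamming n)).
Variable v : T.
Local Notation L3 := [set x : T | hamming v x == 3].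
Local Notation L1 := [set x : T | hamming v x == 1].

Let GCone := Good_cone (@ham_sym n) (@ham0 n).
Let GLocal := Good_local (@ham_sym n) (@ham0 n).
Let GClique := Good_clique (@ham_sym n) (@ham0 n).
Let GElim := Good_elim (@ham_sym n) (@ham0 n).

Ltac splitall := repeat match goal with H : is_true (_ && _) |- _ => case/andP: H => ? ? end.
Ltac posall := repeat match goal with H : is_true (?a != ?b) |- _ =>
   (have := @ham_pos n a b H; clear H) end.

Lemma L12good : GD (NB v :\: L3) 3.
Proof.
apply: (GCone (C := L1)).
  move=> c z; rewrite /Nb !inE => /eqP hc _ /andP [h3 /andP [_ hz]] _.
  by have := ham_tri c v z; rewrite (ham_sym c v) hc; lia.
apply: GLocal => P HP; apply: GLocal => Q HQ; apply: GLocal => R HR.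
apply: GClique => R1 R2 H1 H2 H21.
move: HP HQ HR H1 H2; rewrite /Nb !inE => *; splitall; posall.
have := hamv v P; have := hamv v Q; have := hamv v R; have := hamv v R1; have := hamv v R2.
have := hamxy v P Q; have := hamxy v P R; have := hamxy v Q R; have := hamxy v P R1;
have := hamxy v Q R1; have := hamxy v R R1; have := hamxy v P R2; have := hamxy v Q R2;
have := hamxy v R R2; have := hamxy v R1 R2.
have := ham_sym P Q; have := ham_sym P R; have := ham_sym Q R; have := ham_sym P R1;
have := ham_sym Q R1; have := ham_sym R R1; have := ham_sym P R2; have := ham_sym Q R2;
have := ham_sym R R2; have := ham_sym R1 R2.
have := ham_sym v P; have := ham_sym v Q; have := ham_sym v R; have := ham_sym v R1; have := ham_sym v R2.
move=> *.
have F : #|Dv v R1 :&: Dv v R2| = 1.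
by apply: (@fl2 _ (Dv v P) (Dv v Q) (Dv v R)); lia.
lia.
Qed.

Lemma Lsub (X : {set T}) d : X \subset NB v -> 3 <= d -> GD (X :\: L3) d.
Proof.
move=> XN d3; apply: Good_monoN d3 _; apply: Good_sub L12good.
by apply: setSD.
Qed.

Ltac pairs6 v B C D E F Y :=
  have := hamv v B; have := hamv v C; have := hamv v D; have := hamv v E; have := hamv v F;
  have := hamv v Y;
  have := ham_sym v B; have := ham_sym v C; have := ham_sym v D; have := ham_sym v E;
  have := ham_sym v F; have := ham_sym v Y;
  have := hamxy v B C; have := hamxy v B D; have := hamxy v B E; have := hamxy v B F;
  have := hamxy v B Y; have := hamxy v C D; have := hamxy v C E; have := hamxy v C F;
  have := hamxy v C Y; have := hamxy v D E; have := hamxy v D F; have := hamxy v D Y;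
  have := hamxy v E F; have := hamxy v E Y; have := hamxy v F Y;
  have := hamxy v F D; have := hamxy v F E;
  have := ham_sym B C; have := ham_sym B D; have := ham_sym B E; have := ham_sym B F;
  have := ham_sym B Y; have := ham_sym C D; have := ham_sym C E; have := ham_sym C F;
  have := ham_sym C Y; have := ham_sym D E; have := ham_sym D F; have := ham_sym D Y;
  have := ham_sym E F; have := ham_sym E Y; have := ham_sym F Y.

Lemma G4 B C D E :
  B \in NB v -> B \in L3 -> C \in NB B :&: NB v -> C \in L3 ->
  D \in NB C :&: (NB B :&: NB v) -> D \in L3 ->
  E \in NB D :&: (NB C :&: (NB B :&: NB v)) -> E \in L3 ->
  GD (NB E :&: (NB D :&: (NB C :&: (NB B :&: NB v)))) 3.
Proof.
move=> HB HB3 HC HC3 HD HD3 HE HE3.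
apply: (GCone (C := L3)); last first.
  apply: Lsub => //; apply/subsetP => x; rewrite !inE => /andP [_ /andP [_ /andP [_ /andP [_ ->]]]].
  by [].
move=> F Y HF3 HF HY HYF.
move: HB HB3 HC HC3 HD HD3 HE HE3 HF3 HF HY HYF; rewrite /Nb !inE => *; splitall; posall.
pairs6 v B C D E F Y.
move=> *.
have F1 : #|Dv v B :&: Dv v C :&: Dv v D| = 2.
  by apply: (@fact5 _ _ _ _ (Dv v E) (Dv v F)); lia.
have F2 : #|Dv v B :&: Dv v C :&: Dv v F| = 2.
  by apply: (@fact5 _ _ _ _ (Dv v D) (Dv v E)); lia.
have F3 : #|Dv v Y| <= 2 * #|Dv v F :&: Dv v Y|.
  by apply: (@fcone _ (Dv v B) (Dv v C) (Dv v D)); lia.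
lia.
Qed.

Lemma G3 B C D :
  B \in NB v -> B \in L3 -> C \in NB B :&: NB v -> C \in L3 ->
  D \in NB C :&: (NB B :&: NB v) -> D \in L3 ->
  GD (NB D :&: (NB C :&: (NB B :&: NB v))) 4.
Proof.
move=> HB HB3 HC HC3 HD HD3; apply: (GElim (Y := L3)).
  apply: Lsub => //; apply/subsetP => x; rewrite !inE => /andP [_ /andP [_ /andP [_ ->]]].
  by [].
by move=> E HE HE3; apply: G4.
Qed.

Lemma G2 B C :
  B \in NB v -> B \in L3 -> C \in NB B :&: NB v -> C \in L3 ->
  GD (NB C :&: (NB B :&: NB v)) 5.
Proof.
move=> HB HB3 HC HC3; apply: (GElim (Y := L3)).
  apply: Lsub => //; apply/subsetP => x; rewrite !inE => /andP [_ /andP [_ ->]].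
  by [].
by move=> D HD HD3; apply: G3.
Qed.

Lemma G1 B : B \in NB v -> B \in L3 -> GD (NB B :&: NB v) 6.
Proof.
move=> HB HB3; apply: (GElim (Y := L3)).
  apply: Lsub => //; apply/subsetP => x; rewrite !inE => /andP [_ ->].
  by [].
by move=> C HC HC3; apply: G2.
Qed.

Lemma G0 : GD (NB v) 7.
Proof.
apply: (GElim (Y := L3)); first by apply: Lsub.
by move=> B HB HB3; apply: G1.
Qed.
End Up.

Lemma upper n : d_collapsible 8 (VR_cube n 3).
Proof.
have G : Good (@hamming n) setT 8.
  apply: (Good_local (@ham_sym n) (@ham0 n)) => v _.
  apply: Good_sub (@G0 n v); exact: subsetIl.
have -> : VR_cube n 3 = VRU (@hamming n) setT.
  by apply/setP => A; rewrite /VR_cube /VR /VRU !inE subsetT.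
exact: G.
Qed.

Lemma ex_max (T : finType) (L : complex T) (t : {set T}) :
  t \in L -> exists s, maximal_face L s /\ t \subset s.
Proof.
move=> tL.
pose P : pred {set T} := fun u => (u \in L) && (t \subset u).
have Pt : P t by rewrite /P tL subxx.
case: (@arg_maxnP _ t P (fun u : {set T} => #|u|) Pt) => s /andP [sL ts] smax.
exists s; split=> //; split=> // u uL su.
have : #|u| <= #|s| by apply: smax; rewrite /P uL (subset_trans ts su).
move=> cu; apply/eqP; rewrite eq_sym eqEcard su /=; exact: cu.
Qed.

Section Low.
Variable n : nat.
Hypothesis hn : 4 <= n.
Local Notation T := (cube n).

Definition W : {set T} := [set x : T | [forall i : 'I_n, (4 <= i) ==> ~~ x i]].
Definition anti (x : T) : T := [ffun i : 'I_n => if i < 4 then ~~ x i else x i].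
Definition L4 : {set 'I_n} := [set i : 'I_n | i < 4].

Lemma anti_inv x : anti (anti x) = x.
Proof. by apply/ffunP => i; rewrite !ffunE; case: (i < 4) => //=; case: (x i). Qed.

Lemma antiW x : x \in W -> anti x \in W.
Proof.
rewrite !inE => /forallP h; apply/forallP => i; apply/implyP => hi.
by rewrite ffunE ltnNge hi /=; move: (h i); rewrite hi.
Qed.

Lemma cardL4 : #|L4| = 4.
Proof.
have -> : L4 = (widen_ord hn) @: [set: 'I_4].
  apply/setP => i; rewrite inE; apply/idP/imsetP => [hi|[j _ ->]]; last by rewrite /= ltn_ord.
  by exists (Ordinal hi) => //; apply: val_inj.
rewrite card_imset ?cardsT ?card_ord //.
by move=> j k /(congr1 val) /= /val_inj.
Qed.

Lemma diffL4 x y : x \in W -> y \in W -> [set i | x i != y i] \subset L4.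
Proof.
rewrite !inE => /forallP hx /forallP hy; apply/subsetP => i; rewrite !inE.
rewrite ltnNge; apply: contra => hi.
by move: (hx i) (hy i); rewrite hi /= => /negbTE -> /negbTE ->.
Qed.

Lemma hamW x y : x \in W -> y \in W -> hamming x y <= 4.
Proof.
move=> xW yW; rewrite /hamming -cardL4; exact: subset_leq_card (diffL4 xW yW).
Qed.

Lemma hamW4 x y : x \in W -> y \in W -> hamming x y = 4 -> y = anti x.
Proof.
move=> xW yW h4.
have e : [set i | x i != y i] = L4.
  apply/eqP; rewrite eqEcard diffL4 //= cardL4; move: h4; rewrite /hamming => ->.
  by [].
move: xW yW; rewrite !inE => /forallP hx /forallP hy.
apply/ffunP => i; rewrite ffunE; case: ifP => hi.
  have : i \in [set i | x i != y i] by rewrite e inE hi.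
  by rewrite inE; case: (x i); case: (y i).
move: (hx i) (hy i); rewrite leqNgt hi /= => /negbTE -> /negbTE ->; by [].
Qed.

Lemma ham_anti x : hamming x (anti x) = 4.
Proof.
rewrite /hamming -cardL4; apply: eq_card => i; rewrite !inE ffunE.
by case: ifP => _; case: (x i).
Qed.

Definition emb (f : {ffun 'I_4 -> bool}) : T :=
  [ffun i : 'I_n => if insub (nat_of_ord i) is Some j then f j else false].

Lemma embW f : emb f \in W.
Proof.
rewrite inE; apply/forallP => i; apply/implyP => hi.
by rewrite ffunE insubF // ltnNge hi.
Qed.

Lemma cardW : 16 <= #|W|.
Proof.
have : #|emb @: [set: {ffun 'I_4 -> bool}]| = 16.
  rewrite card_imset ?cardsT ?card_ffun ?card_bool ?card_ord //.
  move=> f g e; apply/ffunP => j.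
  move/ffunP: e => /(_ (widen_ord hn j)); rewrite !ffunE /=.
  by rewrite (valK j).
move=> <-; apply: subset_leq_card; apply/subsetP => x /imsetP [f _ ->]; exact: embW.
Qed.

Local Notation K := (VR_cube n 3).

Lemma inK (A : {set T}) : (A \in K) = [forall x in A, forall y in A, hamming x y <= 3].
Proof. by rewrite /VR_cube /VR inE. Qed.

Lemma addK (g : {set T}) b : g \in K -> (forall x, x \in g -> hamming x b <= 3) -> b |: g \in K.
Proof.
rewrite !inK => /forallP hg hb; apply/forallP => x; apply/implyP; rewrite !inE => hx.
apply/forallP => y; apply/implyP; rewrite !inE => hy.
case/orP: hx => [/eqP ->|hx]; case/orP: hy => [/eqP ->|hy].
- by rewrite ham0.
- by rewrite ham_sym; apply: hb.
- by apply: hb.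
- by move: (hg x); rewrite hx /= => /forallP /(_ y); rewrite hy.
Qed.

Lemma no_coll d (L : complex T) : d <= 7 ->
  (forall A, A \in K -> A \subset W -> A \in L) -> L \subset K ->
  clos_refl_trans_1n _ (elem_collapse d) L set0 -> False.
Proof.
move=> d7 hW LK c; move: c (erefl (set0 : complex T)) hW LK.
move: {1 3}(set0 : complex T) => Z c; move: c.
elim => [L0|L0 L1 L2 st _ IH] eZ hW LK.
  have : (set0 : {set T}) \in L0.
    by apply: hW; rewrite ?inK ?sub0set //; apply/forallP => x; rewrite in_set0.
  by rewrite -eZ in_set0.
have L1L := elem_sub st.
case: (boolP [forall A : {set T}, ((A \in K) && (A \subset W)) ==> (A \in L1)]) => [/forallP h|].
  apply: IH => //; last by apply: subset_trans L1L LK.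
  by move=> A AK AW; move: (h A); rewrite AK AW.
case/forallPn => A; rewrite negb_imply => /andP [/andP [AK AW] AL1].
case: st => g [s [gL cg [[sL smax] gs] suniq eL1]].
have AL : A \in L0 by apply: hW.
have [gA As] : g \subset A /\ A \subset s.
  by move: AL1; rewrite eL1 !inE AL andbT negbK => /andP.
have gW : g \subset W by apply: subset_trans gA AW.
have gK : g \in K by apply: (subsetP LK).
have : ~~ (W \subset g :|: anti @: g).
  apply/negP => /subset_leq_card h.
  have h5 := (leq_card_setU g (anti @: g)).1.
  have h6 := leq_imset_card anti g; have h7 := cardW.
  have h8 : 16 <= #|g| + #|g| := leq_trans h7 (leq_trans h (leq_trans h5 (leq_add (leqnn _) h6))).
  move: h8 cg d7; clear; lia.
case/subsetPn => a aW; rewrite inE negb_or => /andP [ag aag].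
have aag' : anti a \notin g.
  by apply: contra aag => h; rewrite -(anti_inv a); apply: imset_f.
have antiaW := antiW aW.
have f1 : a |: g \in L0.
  apply: hW; last by rewrite subUset sub1set aW gW.
  apply: addK; first exact: gK.
  move=> x xg.
  have xW := subsetP gW x xg.
  have := hamW xW aW; case: (ltngtP (hamming x a) 4) => // h4 _.
  by move: (hamW4 xW aW h4) aag' => ->; rewrite anti_inv xg.
have f2 : anti a |: g \in L0.
  apply: hW; last by rewrite subUset sub1set antiaW gW.
  apply: addK; first exact: gK.
  move=> x xg.
  have xW := subsetP gW x xg.
  have := hamW xW antiaW; case: (ltngtP (hamming x (anti a)) 4) => // h4 _.
  move: (hamW4 xW antiaW h4) => /(congr1 anti); rewrite !anti_inv => e.
  by move: ag; rewrite e xg.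
have [s1 [m1 h1]] := ex_max f1.
have [s2 [m2 h2]] := ex_max f2.
have e1 := suniq _ m1 (subset_trans (subsetUr _ _) h1).
have e2 := suniq _ m2 (subset_trans (subsetUr _ _) h2).
have as1 : a \in s by rewrite -e1; apply: (subsetP h1); rewrite setU11.
have as2 : anti a \in s by rewrite -e2; apply: (subsetP h2); rewrite setU11.
have := subsetP LK s sL; rewrite inK => /forallP /(_ a); rewrite as1 /= => /forallP /(_ (anti a)).
by rewrite as2 ham_anti.
Qed.
End Low.

Theorem lower n : 4 <= n -> forall d, d_collapsible d (VR_cube n 3) -> 8 <= d.
Proof.
move=> hn d hd; rewrite leqNgt; apply/negP => d7.
apply: (@no_coll n hn d (VR_cube n 3)) => //.
by apply: clos_rt_rt1n.
Qed.


Theorem theorem1p6 (n : nat) : 4 <= n ->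
  is_collapsibility_number (VR_cube n 3) 8.
Proof.
move=> hn; split; first exact: upper.
exact: lower hn.
Qed.
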